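(* Let $X$ be a topological space. Then $(C(X),\tau_\Gamma)$ is a Baire space.
   Context: $C(X)$ is the set of continuous real-valued functions on $X$, each identified with its graph in $X\times\mathbb{R}$. The graph topology $\tau_\Gamma$ on $C(X)$ has base $\{F_G: G\text{ open in }X\times\mathbb{R}\}$ where $F_G=\{f\in C(X): f\subset G\}$. *)

(* Defs.v *)
From Stdlib Require Import Reals Lra.
Open Scope R_scope.

Record topology (X : Type) := Topology {
  is_open : (X -> Prop) -> Prop;
  open_full : is_open (fun _ => True);
  open_inter : forall U V, is_open U -> is_open V -> is_open (fun x => U x /\ V x);
  open_union : forall F : (X -> Prop) -> Prop,
      (forall U, F U -> is_open U) -> is_open (fun x => exists U, F U /\ U x)
}.
Arguments is_open {X} t U.

Definition dense {X : Type} (t : topology X) (D : X -> Prop) : Prop :=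
  forall U, is_open t U -> (exists x, U x) -> exists x, U x /\ D x.

Definition baire_space {X : Type} (t : topology X) : Prop :=
  forall D : nat -> (X -> Prop),
    (forall n, is_open t (D n)) -> (forall n, dense t (D n)) ->
    dense t (fun x => forall n, D n x).

Definition R_open (V : R -> Prop) : Prop :=
  forall r, V r -> exists eps, 0 < eps /\ forall s, Rabs (s - r) < eps -> V s.

Definition continuous {X : Type} (t : topology X) (f : X -> R) : Prop :=
  forall V, R_open V -> is_open t (fun x => V (f x)).

Definition prod_open {X : Type} (t : topology X) (W : X * R -> Prop) : Prop :=
  forall x r, W (x, r) -> exists U eps, is_open t U /\ U x /\ 0 < eps /\
    forall y s, U y -> Rabs (s - r) < eps -> W (y, s).

Definition CX {X : Type} (t : topology X) : Type := { f : X -> R | continuous t f }.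

Definition graph_in {X : Type} {t : topology X} (f : CX t) (G : X * R -> Prop) : Prop :=
  forall x, G (x, proj1_sig f x).

Definition F_ {X : Type} (t : topology X) (G : X * R -> Prop) : CX t -> Prop :=
  fun f => graph_in f G.

Definition graph_open {X : Type} (t : topology X) (O : CX t -> Prop) : Prop :=
  forall f, O f -> exists G, prod_open t G /\ F_ t G f /\ forall g, F_ t G g -> O g.

Lemma graph_open_full {X : Type} (t : topology X) : graph_open t (fun _ => True).
Proof.
  intros f _. exists (fun _ => True). split; [|split; [intros x; exact I| intros; exact I]].
  intros x r _. exists (fun _ => True), 1. split; [exact (open_full _ t)|].
  split; [exact I|]. split; [lra| intros; exact I].
Qed.

Lemma graph_open_inter {X : Type} (t : topology X) (O1 O2 : CX t -> Prop) :
  graph_open t O1 -> graph_open t O2 -> graph_open t (fun f => O1 f /\ O2 f).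
Proof.
  intros H1 H2 f [Hf1 Hf2].
  destruct (H1 f Hf1) as [G1 [HG1 [Hf1' HO1]]].
  destruct (H2 f Hf2) as [G2 [HG2 [Hf2' HO2]]].
  exists (fun p => G1 p /\ G2 p). split; [|split].
  - intros x r [Hx1 Hx2].
    destruct (HG1 x r Hx1) as [U1 [e1 [HU1 [Ux1 [He1 HW1]]]]].
    destruct (HG2 x r Hx2) as [U2 [e2 [HU2 [Ux2 [He2 HW2]]]]].
    exists (fun y => U1 y /\ U2 y), (Rmin e1 e2).
    split; [apply open_inter; assumption|]. split; [split; assumption|].
    split; [apply Rmin_pos; assumption|].
    intros y s [Hy1 Hy2] Hs. split.
    + apply HW1; [assumption| eapply Rlt_le_trans; [exact Hs| apply Rmin_l]].
    + apply HW2; [assumption| eapply Rlt_le_trans; [exact Hs| apply Rmin_r]].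
  - intros x; split; [apply Hf1'|apply Hf2'].
  - intros g Hg; split; [apply HO1|apply HO2]; intros x; apply (Hg x).
Qed.

Lemma graph_open_union {X : Type} (t : topology X) (F : (CX t -> Prop) -> Prop) :
  (forall O, F O -> graph_open t O) -> graph_open t (fun f => exists O, F O /\ O f).
Proof.
  intros H f [O [HO Of]].
  destruct (H O HO f Of) as [G [HG [Gf HGO]]].
  exists G. split; [exact HG|]. split; [exact Gf|].
  intros g Hg. exists O. split; [exact HO| apply HGO; exact Hg].
Qed.

Definition graph_topology {X : Type} (t : topology X) : topology (CX t) :=
  Topology (CX t) (graph_open t) (graph_open_full t) (graph_open_inter t)
    (graph_open_union t).

(* Main.v *)
Require Import Defs.
From Stdlib Require Import Reals.
From Stdlib Require Import Lra Lia Classical ClassicalEpsilon FunctionalExtensionality PropExtensionality.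
Open Scope R_scope.

Lemma tri3 (a b c d : R) : Rabs (a - d) <= Rabs (a - b) + Rabs (b - c) + Rabs (c - d).
Proof.
  pose proof (Rabs_triang (a - b) (b - d)).
  pose proof (Rabs_triang (b - c) (c - d)).
  replace (a - b + (b - d)) with (a - d) in H by ring.
  replace (b - c + (c - d)) with (b - d) in H0 by ring. lra.
Qed.

Lemma tri2 (a b c : R) : Rabs (a - c) <= Rabs (a - b) + Rabs (b - c).
Proof.
  pose proof (Rabs_triang (a - b) (b - c)).
  replace (a - b + (b - c)) with (a - c) in H by ring. lra.
Qed.

Lemma ball_open (X:Type) (t:topology X) (f : X -> R) (c r : R) :
  continuous t f -> is_open t (fun z => Rabs (f z - c) < r).
Proof.
  intros Hf. apply (Hf (fun v => Rabs (v - c) < r)).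
  intros v Hv. exists (r - Rabs (v - c)). split; [lra|].
  intros s Hs. pose proof (tri2 s v c). lra.
Qed.

Definition Hset {X} (t:topology X) (n:nat) (f : X -> R) (G : X*R -> Prop) : X*R -> Prop :=
  fun p => exists U e, is_open t U /\ U (fst p) /\ 0 < e /\ e <= (/2)^n /\
    (forall z s, U z -> Rabs (s - f z) < 2*e -> G (z,s)) /\
    (forall z, U z -> Rabs (snd p - f z) < e).

Lemma Hset_open {X} (t:topology X) n f G : continuous t f -> prod_open t (Hset t n f G).
Proof.
  intros Hf x y [U [e [HU [Ux [He [Hen [HG Hy]]]]]]]. simpl in *.
  pose proof (Hy x Ux) as Hyx.
  set (m := e - Rabs (y - f x)).
  assert (Hm : 0 < m) by (unfold m; lra).
  exists (fun z => U z /\ Rabs (f z - f x) < m/4), (m/4).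
  split; [apply open_inter; [exact HU| apply ball_open; exact Hf]|].
  split; [split; [exact Ux| unfold Rminus; rewrite Rplus_opp_r, Rabs_R0; lra]|].
  split; [lra|].
  intros z s [Uz Hz] Hs.
  exists (fun z => U z /\ Rabs (f z - f x) < m/4), e.
  split; [apply open_inter; [exact HU| apply ball_open; exact Hf]|].
  split; [split; assumption|].
  split; [exact He|]. split; [exact Hen|]. split.
  - intros z' s' [Uz' _] Hs'. apply HG; assumption.
  - intros z' [Uz' Hz']. simpl.
    pose proof (tri3 s y (f x) (f z')).
    rewrite (Rabs_minus_sym (f x) (f z')) in H. unfold m in *. lra.
Qed.

Lemma Hset_graph {X} (t:topology X) n f G : continuous t f -> prod_open t G ->
  (forall x, G (x, f x)) -> forall x, Hset t n f G (x, f x).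
Proof.
  intros Hf HGo HG x.
  destruct (HGo x (f x) (HG x)) as [U [e0 [HU [Ux [He0 Hbox]]]]].
  assert (Hp : 0 < (/2)^n) by (apply pow_lt; lra).
  set (e := Rmin (e0/6) ((/2)^n)).
  assert (He : 0 < e) by (apply Rmin_pos; lra).
  assert (He1 : e <= e0/6) by apply Rmin_l.
  assert (He2 : e <= (/2)^n) by apply Rmin_r.
  exists (fun z => U z /\ Rabs (f z - f x) < e), e.
  split; [apply open_inter; [exact HU| apply ball_open; exact Hf]|].
  split; [split; [exact Ux| simpl; unfold Rminus; rewrite Rplus_opp_r, Rabs_R0; lra]|].
  split; [exact He|]. split; [exact He2|]. split.
  - intros z s [Uz Hz] Hs. apply Hbox; [exact Uz|].
    pose proof (tri2 s (f z) (f x)). lra.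
  - intros z [Uz Hz]. simpl. rewrite Rabs_minus_sym. exact Hz.
Qed.

Lemma Hset_sub {X} (t:topology X) n f G p : Hset t n f G p -> G p.
Proof.
  destruct p as [x y]. intros [U [e [HU [Ux [He [Hen [HG Hy]]]]]]]. simpl in *.
  apply HG; [exact Ux|]. pose proof (Hy x Ux). lra.
Qed.

Lemma limit_bound (u : nat -> R) L c b n :
  Un_cv u L -> (forall m, (n <= m)%nat -> Rabs (u m - c) <= b) -> Rabs (L - c) <= b.
Proof.
  intros Hu Hb. destruct (Rle_or_lt (Rabs (L - c)) b) as [H|H]; [exact H|].
  destruct (Hu (Rabs (L - c) - b)) as [N HN]; [lra|].
  specialize (HN (max N n) (Nat.le_max_l _ _)).
  specialize (Hb (max N n) (Nat.le_max_r _ _)). unfold Rdist in HN.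
  pose proof (tri2 L (u (max N n)) c). rewrite Rabs_minus_sym in HN. lra.
Qed.

Lemma small_pow (eps : R) : 0 < eps -> exists N, (/2)^N < eps.
Proof.
  intros He. destruct (pow_lt_1_zero (/2)) with (y := eps) as [N HN].
  - rewrite Rabs_pos_eq; lra.
  - exact He.
  - exists N. specialize (HN N (le_n _)). rewrite Rabs_pos_eq in HN; [exact HN|].
    apply pow_le; lra.
Qed.

Theorem proposition2p3 (X : Type) (t : topology X) :
  baire_space (graph_topology t).
Proof.
  intros D HDo HDd W HW [g0 Wg0].
  change (graph_open t W) in HW.
  assert (HDo' : forall n, graph_open t (D n)) by exact HDo.
  set (Valid := fun (n : nat) (p : CX t * (X*R -> Prop)) =>
    prod_open t (snd p) /\ F_ t (snd p) (fst p) /\ (forall g, F_ t (snd p) g -> D n g)).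
  assert (step : forall n p, exists q, Valid n p -> Valid (S n) q /\
     (forall g, F_ t (snd q) g -> F_ t (Hset t n (proj1_sig (fst p)) (snd p)) g)).
  { intros n p. destruct (classic (Valid n p)) as [V|NV]; [|exists p; tauto].
    destruct V as [Po [Fp _]].
    set (H := Hset t n (proj1_sig (fst p)) (snd p)).
    assert (HFH : graph_open t (F_ t H)).
    { intros g Hg. exists H. split; [apply Hset_open; exact (proj2_sig (fst p))|].
      split; [exact Hg| tauto]. }
    assert (Hne : F_ t H (fst p)).
    { intros x. apply Hset_graph; [exact (proj2_sig (fst p))|exact Po|exact Fp]. }
    destruct (HDd (S n) (F_ t H) HFH (ex_intro _ _ Hne)) as [g [Hg1 Hg2]].
    destruct (graph_open_inter t _ _ HFH (HDo' (S n)) g (conj Hg1 Hg2))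
      as [G' [HG'o [HG'g HG's]]].
    exists (g, G'). intros _. simpl. split; [split; [exact HG'o|split; [exact HG'g|]]|].
    - intros h Hh. apply (HG's h Hh).
    - intros h Hh. apply (HG's h Hh). }
  assert (init : exists p, Valid 0%nat p /\ forall g, F_ t (snd p) g -> W g).
  { destruct (HDd 0%nat W HW (ex_intro _ _ Wg0)) as [g [Hg1 Hg2]].
    destruct (graph_open_inter t _ _ HW (HDo' 0%nat) g (conj Hg1 Hg2))
      as [G' [HG'o [HG'g HG's]]].
    exists (g, G'). simpl. split; [split; [exact HG'o|split; [exact HG'g|]]|].
    - intros h Hh. apply (HG's h Hh).
    - intros h Hh. apply (HG's h Hh). }
  destruct (constructive_indefinite_description _ init) as [p0 [Hp0 Hp0W]].
  set (next := fun n p => proj1_sig (constructive_indefinite_description _ (step n p))).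
  assert (Hnext : forall n p, Valid n p -> Valid (S n) (next n p) /\
     (forall g, F_ t (snd (next n p)) g -> F_ t (Hset t n (proj1_sig (fst p)) (snd p)) g)).
  { intros n p. unfold next. destruct (constructive_indefinite_description _ (step n p)) as [q Hq].
    exact Hq. }
  pose (sq := fix sq (n:nat) : CX t * (X*R->Prop) :=
          match n with 0%nat => p0 | S k => next k (sq k) end).
  assert (Hval : forall n, Valid n (sq n)).
  { induction n; [exact Hp0|]. exact (proj1 (Hnext n (sq n) IHn)). }
  assert (Hstep : forall n g, F_ t (snd (sq (S n))) g ->
     F_ t (Hset t n (proj1_sig (fst (sq n))) (snd (sq n))) g).
  { intros n. exact (proj2 (Hnext n (sq n) (Hval n))). }
  assert (Hchain : forall d n, F_ t (snd (sq n)) (fst (sq (d + n)%nat))).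
  { induction d; intros n.
    - exact (proj1 (proj2 (Hval n))).
    - replace (S d + n)%nat with (d + S n)%nat by lia.
      intros x. apply (Hset_sub t n (proj1_sig (fst (sq n)))).
      apply Hstep. apply IHd. }
  set (fs := fun n x => proj1_sig (fst (sq n)) x).
  assert (Hin : forall n d, F_ t (Hset t n (fs n) (snd (sq n))) (fst (sq (d + S n)%nat))).
  { intros n d. apply Hstep. apply Hchain. }
  assert (Hbd : forall n m x, (n <= m)%nat -> Rabs (fs m x - fs n x) < (/2)^n).
  { intros n m x Hnm. destruct (Nat.eq_dec n m) as [<-|Hne].
    - unfold Rminus. rewrite Rplus_opp_r, Rabs_R0. apply pow_lt; lra.
    - replace m with ((m - S n) + S n)%nat by lia.
      destruct (Hin n (m - S n)%nat x) as [U [e [HU [Ux [He [Hen [HG Hy]]]]]]].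
      cbn [fst snd] in Hy. specialize (Hy x Ux). exact (Rlt_le_trans _ _ _ Hy Hen). }
  assert (Hcv : forall x, {l | Un_cv (fun m => fs m x) l}).
  { intros x. apply R_complete. intros eps Heps.
    destruct (small_pow (eps/2)) as [N HN]; [lra|]. exists N.
    intros n m Hn Hm. unfold Rdist.
    pose proof (Hbd N n x Hn). pose proof (Hbd N m x Hm).
    pose proof (tri2 (fs n x) (fs N x) (fs m x)).
    rewrite (Rabs_minus_sym (fs N x)) in H1. lra. }
  set (lim := fun x => proj1_sig (Hcv x)).
  assert (Hlim : forall x, Un_cv (fun m => fs m x) (lim x)).
  { intros x. unfold lim. exact (proj2_sig (Hcv x)). }
  assert (Hlb : forall n x, Rabs (lim x - fs n x) <= (/2)^n).
  { intros n x. apply (limit_bound _ _ _ _ n (Hlim x)).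
    intros m Hm. left. apply Hbd. exact Hm. }
  assert (Hcont : continuous t lim).
  { intros V HV.
    assert (E : (fun x => V (lim x)) =
       (fun x => exists U, (is_open t U /\ forall z, U z -> V (lim z)) /\ U x)).
    { apply functional_extensionality. intros x. apply propositional_extensionality.
      split.
      - intros Vx. destruct (HV _ Vx) as [eps [Heps Hball]].
        destruct (small_pow (eps/3)) as [N HN]; [lra|].
        exists (fun z => Rabs (fs N z - fs N x) < eps/3). split; [split|].
        + apply ball_open. exact (proj2_sig (fst (sq N))).
        + intros z Hz. apply Hball.
          pose proof (tri3 (lim z) (fs N z) (fs N x) (lim x)).
          pose proof (Hlb N z). pose proof (Hlb N x).
          rewrite (Rabs_minus_sym (fs N x)) in H. lra.
        + unfold Rminus. rewrite Rplus_opp_r, Rabs_R0. lra.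
      - intros [U [[_ HU] Ux]]. exact (HU x Ux). }
    rewrite E. apply open_union. intros U [HU _]. exact HU. }
  set (f := exist _ lim Hcont : CX t).
  assert (HfG : forall n, F_ t (snd (sq n)) f).
  { intros n x. change (snd (sq n) (x, lim x)). apply NNPP. intros Hn.
    set (d := Rabs (lim x - fs n x)).
    assert (Hb : forall m, (S n <= m)%nat -> Rabs (fs m x - fs n x) <= d/2).
    { intros m Hm. replace m with ((m - S n) + S n)%nat by lia.
      destruct (Hin n (m - S n)%nat x) as [U [e [HU [Ux [He [Hen [HG Hy]]]]]]].
      cbn [fst snd] in Hy. specialize (Hy x Ux).
      assert (2 * e <= d).
      { destruct (Rle_or_lt (2*e) d) as [h|h]; [exact h|].
        exfalso. apply Hn. apply HG; [exact Ux|]. exact h. }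
      apply Rlt_le. apply (Rlt_le_trans _ e); [exact Hy| lra]. }
    pose proof (limit_bound _ _ _ _ (S n) (Hlim x) Hb). fold d in H.
    assert (d = 0) by (pose proof (Rabs_pos (lim x - fs n x)); fold d in H0; lra).
    assert (lim x = fs n x).
    { unfold d in H0. destruct (Req_dec (lim x) (fs n x)) as [E|E]; [exact E|]. exfalso. pose proof (Rabs_no_R0 (lim x - fs n x) ltac:(intro; apply E; lra)). lra. }
    apply Hn. rewrite H1. exact (proj1 (proj2 (Hval n)) x). }
  exists f. split.
  - apply Hp0W. exact (HfG 0%nat).
  - intros n. apply (proj2 (proj2 (Hval n))). exact (HfG n).
Qed.
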